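(* Let $m\ge 2$, let $p\in\mathbb{R}^m$ be a probability vector and let $L(y,g)=\max_{j\in\mathcal{Y}}\{\mathbf{1}[j\ne y]+g_j-g_y\}$ be the multiclass hinge loss. Then $$\inf_{g\in\mathbb{R}^m}\sum_{l=1}^m p_l\,L(l,g)=\min\{1,\;2(1-\max_{y}p_y)\},$$ and the infimum is attained: if $\max_y p_y<\tfrac12$ by every constant vector $g=c\mathbf{1}$, $c\in\mathbb{R}$; and if $p_{y^*}=\max_y p_y\ge\tfrac12$ by $g=c\mathbf{1}+e_{y^*}$ for every $c\in\mathbb{R}$.
   Context: Classes $\mathcal{Y}=\{1,\dots,m\}$; $\mathbf{1}$ is the all-ones vector and $e_y$ the $y$-th standard basis vector of $\mathbb{R}^m$. *)

(* Defs.v *)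
From HB Require Import structures.
From mathcomp Require Import all_boot all_order all_algebra.
Set Implicit Arguments. Unset Strict Implicit. Unset Printing Implicit Defensive.
Import Order.TTheory GRing.Theory Num.Theory.
Local Open Scope ring_scope.

(* Classes are 'I_m (i.e. {0,...,m-1}, standing for {1,...,m}); vectors in
   R^m are functions 'I_m -> R. *)

Definition hinge_term (R : realFieldType) (m : nat) (y : 'I_m) (g : 'I_m -> R)
  (j : 'I_m) : R := (j != y)%:R + g j - g y.

(* L(y,g) = max_j { 1[j<>y] + g_j - g_y }.  The big max is seeded with the
   term for j = y itself (which belongs to the family), so this is exactly the
   maximum over all j. *)
Definition hinge_loss (R : realFieldType) (m : nat) (y : 'I_m) (g : 'I_m -> R) : R :=
  \big[Num.max/hinge_term y g y]_(j < m) hinge_term y g j.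

Definition hinge_risk (R : realFieldType) (m : nat) (p g : 'I_m -> R) : R :=
  \sum_(l < m) p l * hinge_loss l g.

(* Main.v *)
Require Import Defs.
From HB Require Import structures.
From mathcomp Require Import all_boot all_order all_algebra.
From mathcomp Require Import ring lra.
Import Order.TTheory GRing.Theory Num.Theory.
Local Open Scope ring_scope.

Section H.
Context {R : realFieldType}.

Lemma bm_ge (I : finType) (P : pred I) (F : I -> R) x0 j :
  P j -> F j <= \big[Num.max/x0]_(i | P i) F i.
Proof.
move=> Pj; rewrite (bigD1 j) //=.
by rewrite le_max lexx.
Qed.

Lemma bm_ge0 (I : finType) (P : pred I) (F : I -> R) x0 :
  x0 <= \big[Num.max/x0]_(i | P i) F i.
Proof.
apply: (big_rec (fun x => x0 <= x)) => //= i x _ Hx.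
by rewrite le_max Hx orbT.
Qed.

Lemma bm_le (I : finType) (P : pred I) (F : I -> R) x0 b :
  x0 <= b -> (forall i, P i -> F i <= b) -> \big[Num.max/x0]_(i | P i) F i <= b.
Proof.
move=> H0 H; apply: (big_ind (fun x => x <= b)) => //= x y Hx Hy.
by rewrite ge_max Hx Hy.
Qed.

Lemma bm_att (I : finType) (P : pred I) (F : I -> R) x0 :
  (exists k, P k /\ x0 = F k) ->
  exists k, P k /\ \big[Num.max/x0]_(i | P i) F i = F k.
Proof.
move=> H.
apply: (big_rec (fun x => exists k, P k /\ x = F k)) => //= a y Pa [b [Pb ->]].
have [h|h] := leP (F a) (F b).
- by exists b; split => //; apply/eqP; rewrite eq_le ge_max h lexx /= le_max lexx orbT.
- by exists a; split => //; apply/eqP; rewrite eq_le ge_max lexx (ltW h) /= le_max lexx.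
Qed.
End H.
Lemma loss_ge {R : realFieldType} {m : nat} (l j : 'I_m) (g : 'I_m -> R) :
  hinge_term l g j <= hinge_loss l g.
Proof. exact: bm_ge. Qed.

Lemma lowerb (R : realFieldType) (m : nat) (hm : (2 <= m)%N)
  (p : 'I_m -> R) (hp0 : forall l, 0 <= p l) (hp1 : \sum_(l < m) p l = 1)
  (ystar : 'I_m) (hmax : forall y, p y <= p ystar) (g : 'I_m -> R) :
  Num.min 1 (2 * (1 - p ystar)) <= hinge_risk p g.
Proof.
pose i0 : 'I_m := Ordinal (ltnW hm).
pose i1 : 'I_m := Ordinal hm.
have [k [_ Hk]] := @bm_att _ _ xpredT g _ (ex_intro _ i0 (conj erefl erefl)).
have gk : forall j, g j <= g k by move=> j; rewrite -Hk; exact: bm_ge.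
pose j0 := if k == i0 then i1 else i0.
have j0k : j0 != k.
  rewrite /j0; case: (eqVneq k i0) => [->|h]; last by rewrite eq_sym.
  by apply/eqP => /(congr1 val).
have [k2 [k2k Hk2]] := @bm_att _ _ (fun j => j != k) g _ (ex_intro _ j0 (conj j0k erefl)).
have gk2 : forall j, j != k -> g j <= g k2 by move=> j jk; rewrite -Hk2; exact: bm_ge.
set d := g k - g k2.
have d0 : 0 <= d by rewrite /d subr_ge0.
have Lk0 : 0 <= hinge_loss k g.
  have := loss_ge k k g. rewrite /hinge_term eqxx /= add0r subrr. done.
have Lk1 : 1 - d <= hinge_loss k g.
  have := loss_ge k k2 g; rewrite /hinge_term k2k /d /=; lra.
have Ll : forall l, l != k -> 1 + d <= hinge_loss l g.
  move=> l lk; have := loss_ge l k g; rewrite /hinge_term eq_sym lk /d /=.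
  have := gk2 l lk; lra.
have hs : \sum_(l < m | l != k) p l = 1 - p k.
  by have := hp1; rewrite (bigD1 k) //=; lra.
have hr : p k * hinge_loss k g + (1 - p k) * (1 + d) <= hinge_risk p g.
  rewrite /hinge_risk (bigD1 k) //= lerD2l -hs big_distrl /=.
  by apply: ler_sum => l lk; rewrite ler_wpM2l // Ll.
apply: le_trans hr; rewrite ge_min.
have pk0 := hp0 k; have pks := hmax k.
have pk1 : p k <= 1 by rewrite -hp1 (bigD1 k) //= lerDl sumr_ge0.
have [hd|hd] := lerP d 1.
- have [hp|hp] := lerP (p k) (2^-1).
  + apply/orP; left.
    have h2 : 2 * p k <= 1 by lra.
    nra.
  + apply/orP; right. nra.
- apply/orP; right. nra.
Qed.

Theorem mainTheorem6 (R : realFieldType) (m : nat) (hm : (2 <= m)%N)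
  (p : 'I_m -> R) (hp0 : forall l, 0 <= p l) (hp1 : \sum_(l < m) p l = 1)
  (ystar : 'I_m) (hmax : forall y, p y <= p ystar) :
  (forall g : 'I_m -> R, Num.min 1 (2 * (1 - p ystar)) <= hinge_risk p g) /\
  (p ystar < 2^-1 -> forall c : R,
     hinge_risk p (fun _ => c) = Num.min 1 (2 * (1 - p ystar))) /\
  (2^-1 <= p ystar -> forall c : R,
     hinge_risk p (fun j => c + (j == ystar)%:R) = Num.min 1 (2 * (1 - p ystar))).
Proof.
pose i0 : 'I_m := Ordinal (ltnW hm).
pose i1 : 'I_m := Ordinal hm.
have other : forall l : 'I_m, exists j, j != l.
  move=> l; case: (eqVneq l i0) => [->|h]; last by exists i0; rewrite eq_sym.
  by exists i1; apply/eqP => /(congr1 val).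
split; first exact: lowerb.
split.
- move=> hp c.
  have L1 : forall l : 'I_m, hinge_loss l (fun _ => c) = 1.
    move=> l; apply: le_anti; apply/andP; split.
      apply: bm_le => [|j _]; rewrite /hinge_term ?eqxx /=.
        by rewrite addrK ler01.
      by rewrite addrK; case: (j != l); rewrite /= ?ler01.
    have [j jl] := other l.
    have := loss_ge l j (fun _ => c); rewrite /hinge_term jl /= addrK.
    done.
  rewrite /hinge_risk (eq_bigr (fun l => p l)); last by move=> l _; rewrite L1 mulr1.
  rewrite hp1 min_l //; lra.
- move=> hp c.
  have L0 : hinge_loss ystar (fun j => c + (j == ystar)%:R) = 0.
    apply: le_anti; apply/andP; split.
      apply: bm_le => [|j _]; rewrite /hinge_term ?eqxx /=.
        by rewrite addrK.
      case: (eqVneq j ystar) => [e|h]; first by subst j; rewrite /=; lra.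
      by rewrite /=; lra.
    have := loss_ge ystar ystar (fun j => c + (j == ystar)%:R).
    by rewrite /hinge_term eqxx /=; lra.
  have L2 : forall l : 'I_m, l != ystar -> hinge_loss l (fun j => c + (j == ystar)%:R) = 2.
    move=> l ly.
    apply: le_anti; apply/andP; split.
      apply: bm_le => [|j _]; rewrite /hinge_term ?eqxx ?(negbTE ly) /=.
        lra.
      by case: (j != l); case: (j == ystar) => /=; lra.
    have := loss_ge l ystar (fun j => c + (j == ystar)%:R).
    by rewrite /hinge_term eqxx eq_sym ly (negbTE ly) /=; lra.
  rewrite /hinge_risk (bigD1 ystar) //= L0 mulr0 add0r.
  rewrite (eq_bigr (fun l => p l * 2)); last by move=> l ly; rewrite L2.
  rewrite -big_distrl /= min_r.
    by have := hp1; rewrite (bigD1 ystar) //=; lra.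
  lra.
Qed.
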